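(* Let $Q\in(0,1/2)$, $\sigma>0$ and $\beta\in(0,1)$, and define $\pi^B(\beta)=\frac{(1-2Q)\sigma}{1+\sigma}+2Q\beta$, $\Delta_O^B(\beta)=\frac{\beta Q(\sigma+1)-2Q\sigma+\sigma}{2\beta Q(\sigma+1)-2Q\sigma+\sigma}-\frac{(1-2Q)\sigma}{1+\sigma}-Q$, $V(\beta)=\pi^B(\beta)\Delta_O^B(\beta)=(1-2Q)\frac{\sigma+Q\left(\beta-\sigma+\sigma^2(1-\beta)\right)}{(\sigma+1)^2}$. Then (i) $\pi^B$ is strictly increasing and $\Delta_O^B$ is strictly decreasing in $\beta$; (ii) $\frac{\partial^2V}{\partial\beta\,\partial\sigma}<0$, and $V'(\beta)>0$ if $\sigma<1$, $V'(\beta)=0$ if $\sigma=1$, $V'(\beta)<0$ if $\sigma>1$.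
   Context: Interpretation (not needed for the claim): in a model with a symmetric type distribution $F$ on $[-1/2,1/2]$, recommendation threshold $R$, $\beta=F(1/2-R)$, prior probabilities $q_H,q_1,q_2,q_L$ of product versions $(1,1),(1,0),(0,1),(0,0)$, $Q=(q_1+q_2)/2$ and $\sigma=q_H/q_L$, the quantities $\pi^B$, $\Delta_O^B$ and $V$ are the probability of a buy recommendation, the objective effect of a buy recommendation, and the value of the recommendation system. *)

(* Defs.v *)
From Stdlib Require Import Reals.
From Coquelicot Require Import Coquelicot.
Open Scope R_scope.

Definition piB (Q sigma beta : R) : R :=
  (1 - 2 * Q) * sigma / (1 + sigma) + 2 * Q * beta.

Definition DeltaOB (Q sigma beta : R) : R :=
  (beta * Q * (sigma + 1) - 2 * Q * sigma + sigma)
    / (2 * beta * Q * (sigma + 1) - 2 * Q * sigma + sigma)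
  - (1 - 2 * Q) * sigma / (1 + sigma) - Q.

Definition V (Q sigma beta : R) : R := piB Q sigma beta * DeltaOB Q sigma beta.

(* Main.v *)
Require Import Defs.
From Stdlib Require Import Reals Lra Psatz.
From Coquelicot Require Import Coquelicot.
Open Scope R_scope.

Lemma locally_pos (x : R) : 0 < x -> locally x (fun t => 0 < t).
Proof.
  intros H. exists (mkposreal x H). intros y Hy.
  change (Rabs (y - x) < x) in Hy.
  apply Rabs_lt_between' in Hy. lra.
Qed.

Definition Cf (Q s b : R) : R :=
  (1 - 2 * Q) * (s + Q * (b - s + s ^ 2 * (1 - b))) / (s + 1) ^ 2.

Lemma VC (Q s b : R) : 0 < Q < 1/2 -> 0 < s -> 0 <= b -> V Q s b = Cf Q s b.
Proof.
  intros hQ hs hb. unfold V, piB, DeltaOB, Cf.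
  assert (0 < s * (1 - 2*Q)) by (apply Rmult_lt_0_compat; lra).
  assert (0 <= b * (Q * (s+1))) by (apply Rmult_le_pos; [lra| apply Rmult_le_pos; lra]).
  assert (0 < 2 * b * Q * (s + 1) - 2 * Q * s + s) by lra.
  field. split; lra.
Qed.

Lemma dCb (Q s b : R) : 0 < s -> is_derive (fun b => Cf Q s b) b ((1 - 2*Q) * Q * (1 - s) / (1 + s)).
Proof. intros hs. unfold Cf. auto_derive. trivial. field. lra. Qed.

Definition g (Q s : R) := (1 - 2*Q) * Q * (1 - s) / (1 + s).

Lemma dg (Q s : R) : 0 < s -> is_derive (g Q) s (- 2 * (1 - 2*Q) * Q / (1 + s)^2).
Proof. intros hs. unfold g. auto_derive. lra. field. lra. Qed.

Lemma DV (Q s b : R) : 0 < Q < 1/2 -> 0 < s -> 0 < b ->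
  is_derive (fun b => V Q s b) b (g Q s).
Proof.
  intros hQ hs hb. apply is_derive_ext_loc with (f := fun b => Cf Q s b).
  - apply filter_imp with (P := fun t => 0 < t); [|apply locally_pos; exact hb].
    intros t ht. symmetry. apply VC; lra.
  - apply dCb; exact hs.
Qed.

Lemma frac_lt n1 n2 d1 d2 : 0 < d1 -> 0 < d2 -> n2 * d1 < n1 * d2 -> n2 / d2 < n1 / d1.
Proof.
  intros h1 h2 h.
  replace (n2/d2) with ((n2*d1) * / (d1*d2)) by (field; lra).
  replace (n1/d1) with ((n1*d2) * / (d1*d2)) by (field; lra).
  apply Rmult_lt_compat_r; [apply Rinv_0_lt_compat; nra | exact h].
Qed.

Theorem lemma2 (Q sigma : R) (hQ : 0 < Q < 1/2) (hs : 0 < sigma) :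
  (* closed form of V *)
  (forall beta, 0 < beta < 1 ->
     V Q sigma beta
     = (1 - 2 * Q) * (sigma + Q * (beta - sigma + sigma ^ 2 * (1 - beta)))
         / (sigma + 1) ^ 2) /\
  (* (i) piB strictly increasing, DeltaOB strictly decreasing in beta on (0,1) *)
  (forall b1 b2, 0 < b1 -> b1 < b2 -> b2 < 1 ->
     piB Q sigma b1 < piB Q sigma b2 /\ DeltaOB Q sigma b2 < DeltaOB Q sigma b1) /\
  (* (ii) cross partial derivative d^2 V / (d beta d sigma) < 0 *)
  (forall beta, 0 < beta < 1 ->
     ex_derive (fun s => Derive (fun b => V Q s b) beta) sigma /\
     Derive (fun s => Derive (fun b => V Q s b) beta) sigma < 0) /\
  (* (ii) sign of V'(beta) according to sigma vs 1 *)
  (forall beta, 0 < beta < 1 ->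
     ex_derive (V Q sigma) beta /\
     (sigma < 1 -> Derive (V Q sigma) beta > 0) /\
     (sigma = 1 -> Derive (V Q sigma) beta = 0) /\
     (sigma > 1 -> Derive (V Q sigma) beta < 0)).
Proof.
  assert (hc : 0 < sigma * (1 - 2*Q)) by (apply Rmult_lt_0_compat; lra).
  assert (ha : 0 < Q * (sigma + 1)) by (apply Rmult_lt_0_compat; lra).
  assert (hq : 0 < (1 - 2*Q) * Q) by (apply Rmult_lt_0_compat; lra).
  split; [|split; [|split]].
  - intros beta hb. apply VC; lra.
  - intros b1 b2 h1 h12 h2. split.
    + unfold piB. nra.
    + unfold DeltaOB.
      assert (0 < b1 * (Q * (sigma+1))) by (apply Rmult_lt_0_compat; lra).
      assert (0 < b2 * (Q * (sigma+1))) by (apply Rmult_lt_0_compat; lra).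
      assert (0 < (Q * (sigma + 1)) * (sigma * (1 - 2*Q)) * (b2 - b1))
        by (apply Rmult_lt_0_compat; [apply Rmult_lt_0_compat|]; lra).
      apply Rplus_lt_compat_r, Rplus_lt_compat_r.
      apply frac_lt; lra.
  - intros beta hb.
    assert (E : locally sigma (fun s => g Q s = Derive (fun b => V Q s b) beta)).
    { apply filter_imp with (P := fun t => 0 < t); [|apply locally_pos; exact hs].
      intros t ht. symmetry. apply is_derive_unique. apply DV; lra. }
    split.
    + apply ex_derive_ext_loc with (f := g Q); [exact E|].
      eexists. apply dg; exact hs.
    + pose proof (is_derive_ext_loc _ _ _ _ E (dg Q sigma hs)) as H'.
      erewrite is_derive_unique; [|exact H'].
      assert (0 < (1 + sigma)^2) by (apply pow_lt; lra).
      unfold Rdiv. apply Rmult_neg_pos; [lra | apply Rinv_0_lt_compat; lra].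
  - intros beta hb.
    pose proof (DV Q sigma beta hQ hs (proj1 hb)) as D.
    erewrite is_derive_unique; [|exact D].
    assert (0 < 1 + sigma) by lra.
    unfold g. split; [eexists; exact D|]. split; [|split].
    + intros h. unfold Rdiv. apply Rmult_gt_0_compat; [apply Rmult_lt_0_compat; lra | apply Rinv_0_lt_compat; lra].
    + intros h. subst sigma. unfold Rdiv. ring.
    + intros h. unfold Rdiv. apply Rmult_neg_pos; [assert (0 < (1-2*Q)*Q*(sigma-1)) by (apply Rmult_lt_0_compat; lra); lra | apply Rinv_0_lt_compat; lra].
Qed.
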